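(* Let $\psi\in\mathbb{R}[x]$ be a polynomial of degree $\ge 3$ with homogeneous expansion $\psi=\psi_t+\dots+\psi_m$, where $\psi_t\neq 0$ and $\psi_m\neq 0$. If the constant function $1$ is in the image of the Fischer operator $F_\psi$, then $\psi_m$ is a harmonic divisor.
   Context: $\mathbb{R}[x]$ denotes the real polynomials in $d$ variables, $\Delta$ the Laplacian, and $F_\psi:\mathbb{R}[x]\to\mathbb{R}[x]$, $F_\psi(q)=\Delta(\psi q)$, the Fischer operator. A polynomial $f_j$ is homogeneous of degree $j$ if $f_j(rx)=r^jf_j(x)$ for all $r>0$, $x\in\mathbb{R}^d$; every polynomial of degree $m$ is written uniquely as $f=f_t+\dots+f_m$ with $f_j$ homogeneous of degree $j$, $f_t\ne0$, $f_m\ne 0$. A polynomial $f$ is a harmonic divisor if there exists a non-zero polynomial $q$ such that $fq$ is harmonic. *)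

(* Defs.v *)
From HB Require Import structures.
From mathcomp Require Import all_boot all_order all_algebra.
From mathcomp Require Import reals.
From mathcomp Require Import mpoly.

Set Implicit Arguments.
Unset Strict Implicit.
Unset Printing Implicit Defensive.

Import Order.TTheory GRing.Theory Num.Theory.
Local Open Scope ring_scope.

Definition laplacian {R : ringType} {n : nat} (p : {mpoly R[n]}) : {mpoly R[n]} :=
  \sum_(i < n) mderiv i (mderiv i p).

Definition fischer {R : comRingType} {n : nat} (psi q : {mpoly R[n]}) : {mpoly R[n]} :=
  laplacian (psi * q).

Definition homog_part {R : ringType} {n : nat} (k : nat) (p : {mpoly R[n]}) : {mpoly R[n]} :=
  \sum_(m <- msupp p | mdeg m == k) p@_m *: 'X_[m].

(* Total degree of a polynomial (msize p = 1 + degree for p != 0). *)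
Definition tdeg {R : ringType} {n : nat} (p : {mpoly R[n]}) : nat := (msize p).-1.

Definition harmonic_divisor {R : comRingType} {n : nat} (f : {mpoly R[n]}) : Prop :=
  exists q : {mpoly R[n]}, q != 0 /\ laplacian (f * q) = 0.

(* Main.v *)
Require Import Defs.
From HB Require Import structures.
From mathcomp Require Import all_boot all_order all_algebra.
From mathcomp Require Import reals.
From mathcomp Require Import mpoly.
From mathcomp Require Import zify.
Import GRing.Theory Num.Theory.
Local Open Scope ring_scope.

Section S.
Variable (R : idomainType) (n : nat).
Implicit Types (p q : {mpoly R[n]}).

Lemma hp_coef k p m : (homog_part k p)@_m = if mdeg m == k then p@_m else 0.
Proof.
rewrite /homog_part raddf_sum /=.
under eq_bigr => m' _ do rewrite mcoeffZ mcoeffX.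
rewrite big_mkcond /=.
case: (boolP (m \in msupp p)) => Hm.
  rewrite (bigD1_seq m) ?msupp_uniq //= eqxx mulr1.
  rewrite big1 ?addr0; last first.
    by move=> m' /negbTE ->; rewrite mulr0; case: ifP.
  by case: (mdeg m == k).
rewrite big1; last first.
  move=> m' _; have [->|ne] := eqVneq m' m; last by rewrite mulr0; case: ifP.
  rewrite mcoeff_msupp negbK in Hm; rewrite (eqP Hm) mul0r.
  by case: ifP.
by rewrite mcoeff_msupp negbK in Hm; rewrite (eqP Hm); case: ifP.
Qed.

Lemma lap_coef p m : (laplacian p)@_m =
  \sum_(i < n) p@_(m + U_(i) + U_(i)) *+ ((m + U_(i))%MM i).+1 *+ (m i).+1.
Proof.
rewrite /laplacian raddf_sum /=; apply: eq_bigr => i _.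
by rewrite !mcoeff_mderiv.
Qed.

Lemma hp_lap k p : homog_part k (laplacian p) = laplacian (homog_part k.+2 p).
Proof.
apply/mpolyP => m; rewrite hp_coef !lap_coef.
have E i : mdeg (m + U_(i) + U_(i))%MM = (mdeg m).+2.
  by rewrite !mdegD mdeg1 addn1 addn1.
case: eqP => Hk.
  apply: eq_bigr => i _; by rewrite hp_coef E Hk eqxx.
rewrite big1 // => i _; rewrite hp_coef E !eqSS.
by case: eqP => // _; rewrite !mul0rn.
Qed.

Lemma msize_leP p u : (forall m, p@_m != 0 -> (mdeg m < u)%N) -> (msize p <= u)%N.
Proof.
move=> H; rewrite msizeE; apply/bigmax_leqP_seq => m Hm _.
by apply: H; rewrite -mcoeff_msupp.
Qed.

Lemma msizeM_le2 p q : (msize (p * q) <= (msize p + msize q).-1)%N.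
Proof.
have [->|nz_p ] := eqVneq p 0; first by rewrite mul0r msize0.
have [->|nz_q ] := eqVneq q 0; first by rewrite mulr0 msize0.
by rewrite msizeM.
Qed.

Lemma hp_small k p : (msize p <= k)%N -> homog_part k p = 0.
Proof.
move=> H; apply/mpolyP => m; rewrite hp_coef mcoeff0.
case: eqP => // E; subst k.
by apply/eqP; move: (msize_mdeg_ge H); rewrite mcoeff_msupp negbK.
Qed.

Lemma msize_hp k p : (msize (homog_part k p) <= k.+1)%N.
Proof.
apply: msize_leP => m; rewrite hp_coef.
by have [->|_] := eqVneq (mdeg m) k; rewrite ?eqxx.
Qed.

Lemma msize_rest p : (msize (p - homog_part (tdeg p) p) <= tdeg p)%N.
Proof.
apply: msize_leP => m; rewrite mcoeffB hp_coef.
have [_|Hne] := eqVneq (mdeg m) (tdeg p); first by rewrite subrr eqxx.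
rewrite subr0 -mcoeff_msupp => /msize_mdeg_lt.
move: Hne; rewrite /tdeg; case: (msize p) => //= s Hne; rewrite ltnS leq_eqVlt.
by case/orP => // /eqP E; rewrite E eqxx in Hne.
Qed.

Lemma hp_top_ne0 p : p != 0 -> homog_part (tdeg p) p != 0.
Proof.
move=> nz; apply/eqP => /mpolyP /(_ (mlead p)); rewrite hp_coef mcoeff0.
rewrite /tdeg -mlead_deg // /= eqxx => /eqP; by rewrite mleadc_eq0 (negbTE nz).
Qed.

Lemma hp_pi k p : homog_part k p = pihomog mdeg k p.
Proof. by []. Qed.

Lemma hp_mul p q : p != 0 -> q != 0 ->
  homog_part (tdeg p + tdeg q) (p * q) = homog_part (tdeg p) p * homog_part (tdeg q) q.
Proof.
move=> nzp nzq.
set a := tdeg p; set b := tdeg q.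
set P := homog_part a p; set Q := homog_part b q.
have Ep : p = P + (p - P) by rewrite addrC subrK.
have Eq : q = Q + (q - Q) by rewrite addrC subrK.
have s1 : (msize (p - P) <= a)%N := msize_rest p.
have s2 : (msize (q - Q) <= b)%N := msize_rest q.
have s3 : (msize P <= a.+1)%N := msize_hp a p.
have s4 : (msize Q <= b.+1)%N := msize_hp b q.
move: (p - P) (q - Q) s1 s2 Ep Eq => p' q' s1 s2 Ep Eq.
rewrite {1}Ep {1}Eq mulrDl !mulrDr !hp_pi !pihomogD -!hp_pi.
rewrite [homog_part _ (P * Q)]hp_pi pihomog_dE; last first.
  by apply: dhomogM; apply: pihomogP.
rewrite !hp_small ?addr0 //; apply: leq_trans (msizeM_le2 _ _) _; lia.
Qed.

Lemma lap0 : laplacian (0 : {mpoly R[n]}) = 0.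
Proof. by rewrite /laplacian big1 // => i _; rewrite !mderiv0. Qed.

End S.

Theorem mainTheorem2 (R : realType) (d : nat) (psi : {mpoly R[d]}) :
  (3 <= tdeg psi)%N ->
  (exists q : {mpoly R[d]}, fischer psi q = 1) ->
  harmonic_divisor (homog_part (tdeg psi) psi).
Proof.
move=> H3 [q Hq].
have nzq : q != 0.
  apply/eqP => q0; move: Hq; rewrite q0 /fischer mulr0 lap0 => /eqP.
  by rewrite eq_sym oner_eq0.
have nzpsi : psi != 0.
  by apply/eqP => p0; move: H3; rewrite p0 /tdeg msize0.
exists (homog_part (tdeg q) q); split; first exact: hp_top_ne0.
rewrite -hp_mul //.
have E : (tdeg psi + tdeg q = (tdeg psi + tdeg q - 2).+2)%N by lia.
rewrite E -hp_lap; rewrite /fischer in Hq; rewrite Hq hp_small // msize1; lia.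
Qed.
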